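(* Let $\{ N_\alpha : A \to A \}_{\alpha \in \Omega}$ be a Nijenhuis family on an associative algebra $A$. Then the linear map $N: A \otimes \mathbf{k}\Omega \to A \otimes \mathbf{k}\Omega$, $N(a \otimes \alpha) = N_\alpha(a) \otimes \alpha$, is a Nijenhuis operator on the algebra $A \otimes \mathbf{k}\Omega$, i.e. $N(X)\bullet N(Y) = N\big(N(X)\bullet Y + X\bullet N(Y) - N(X\bullet Y)\big)$ for all $X,Y$.
   Context: $\Omega$ is a semigroup and $\mathbf{k}\Omega$ its semigroup algebra. A Nijenhuis family is a collection of linear maps $N_\alpha:A\to A$ with $N_\alpha(a) \cdot N_\beta(b) = N_{\alpha \beta} \big( N_\alpha (a) \cdot b + a \cdot N_\beta(b) - N_{\alpha \beta}(a \cdot b) \big)$ for all $a,b\in A$, $\alpha,\beta\in\Omega$. $A\otimes\mathbf{k}\Omega$ has product $(a \otimes \alpha) \bullet (b \otimes \beta) = a \cdot b \otimes \alpha \beta$. *)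

(* Defs.v *)
From HB Require Import structures.
From mathcomp Require Import all_boot all_order all_algebra.
From mathcomp Require Import finmap.
Set Implicit Arguments. Unset Strict Implicit. Unset Printing Implicit Defensive.
Import GRing.Theory.
Local Open Scope fset_scope.
Local Open Scope ring_scope.

(* A (x) kOmega is represented as the free A-module on Omega, i.e. finitely
   supported functions Omega -> A:  X = \sum_alpha X(alpha) (x) alpha. *)
Notation tensSG A Omega := {fsfun Omega -> A with 0%R}.

Section Tens.
Variables (Omega : choiceType) (A : pzRingType).

Definition tens_pure (a : A) (al : Omega) : tensSG A Omega :=
  [fsfun x in [fset al] => if x == al then a else 0 | 0].

Definition tens_add (X Y : tensSG A Omega) : tensSG A Omega :=
  [fsfun x in finsupp X `|` finsupp Y => X x + Y x | 0].

Definition tens_opp (X : tensSG A Omega) : tensSG A Omega :=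
  [fsfun x in finsupp X => - X x | 0].

Definition tens_sub (X Y : tensSG A Omega) := tens_add X (tens_opp Y).

(* (a (x) alpha) . (b (x) beta) = ab (x) alpha beta, extended bilinearly *)
Definition tens_mul (mul : Omega -> Omega -> Omega) (X Y : tensSG A Omega)
  : tensSG A Omega :=
  [fsfun g in [fset mul a b | a in finsupp X, b in finsupp Y] =>
     \sum_(a <- finsupp X) \sum_(b <- finsupp Y | mul a b == g) X a * Y b | 0].

Definition tens_N (N : Omega -> A -> A) (X : tensSG A Omega) : tensSG A Omega :=
  [fsfun a in finsupp X => N a (X a) | 0].

End Tens.

Definition nijenhuis_family (Omega : Type) (mul : Omega -> Omega -> Omega)
  (A : pzRingType) (N : Omega -> A -> A) : Prop :=
  forall (a b : A) (al be : Omega),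
    N al a * N be b =
    N (mul al be) (N al a * b + a * N be b - N (mul al be) (a * b)).

(* Main.v *)
Require Import Defs.
From HB Require Import structures.
From mathcomp Require Import all_boot all_order all_algebra.
From mathcomp Require Import finmap.
Local Open Scope ring_scope.
Import GRing.Theory.

Section H.
Variables (Omega : choiceType) (A : pzRingType).
Implicit Types X Y : tensSG A Omega.

Lemma tens_addE X Y g : tens_add X Y g = X g + Y g.
Proof.
rewrite /tens_add fsfunE; case: ifP => //.
move/negbT; rewrite inE /= !mem_finsupp negb_or !negbK => /andP[/eqP -> /eqP ->].
by rewrite addr0.
Qed.

Lemma tens_oppE X g : tens_opp X g = - X g.
Proof.
rewrite /tens_opp fsfunE; case: ifP => //.
by move/negbT; rewrite mem_finsupp negbK => /eqP ->; rewrite oppr0.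
Qed.

Lemma tens_NE (N : Omega -> A -> A) (N0 : forall a, N a 0 = 0) X g :
  tens_N N X g = N g (X g).
Proof.
rewrite /tens_N fsfunE; case: ifP => //.
by move/negbT; rewrite mem_finsupp negbK => /eqP ->; rewrite N0.
Qed.

Lemma tens_mulE mul X Y (S T : {fset Omega}) g :
  (finsupp X `<=` S)%fset -> (finsupp Y `<=` T)%fset ->
  tens_mul mul X Y g = \sum_(a <- S) \sum_(b <- T | mul a b == g) X a * Y b.
Proof.
move=> sXS sYT.
have E1 : tens_mul mul X Y g =
   \sum_(a <- finsupp X) \sum_(b <- finsupp Y | mul a b == g) X a * Y b.
  rewrite /tens_mul fsfunE; case: ifP => // /negbT Hg.
  symmetry; rewrite big_seq; apply: big1 => a aX.
  rewrite big_seq_cond; apply: big1 => b /andP[bY /eqP Eg].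
  by case/negP: Hg; rewrite -Eg; apply: in_imfset2.
rewrite E1 (big_fset_incl +%R sXS); last first.
  move=> a _; rewrite mem_finsupp negbK => /eqP ->.
  by rewrite big1 // => b _; rewrite mul0r.
apply: eq_bigr => a _.
rewrite !(big_mkcond (fun b => mul a b == g)) /=.
rewrite (big_fset_incl +%R sYT) //.
move=> b _; rewrite mem_finsupp negbK => /eqP ->.
by rewrite mulr0 if_same.
Qed.
End H.

Theorem proposition2p9 (k : comNzRingType) (A : algType k)
  (Omega : choiceType) (mul : Omega -> Omega -> Omega)
  (mulA : associative mul)
  (N : Omega -> {linear A -> A})
  (HN : nijenhuis_family mul (fun al => N al : A -> A)) :
  forall X Y : tensSG A Omega,
    let NN := tens_N (fun al => N al : A -> A) in
    tens_mul mul (NN X) (NN Y) =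
    NN (tens_sub (tens_add (tens_mul mul (NN X) Y) (tens_mul mul X (NN Y)))
                 (NN (tens_mul mul X Y))).
Proof.
move=> X Y NN.
have N0 : forall a, (N a : A -> A) 0 = 0 by move=> a; rewrite raddf0.
have NNE : forall Z g, NN Z g = N g (Z g) by move=> Z g; rewrite /NN tens_NE.
have sN : forall Z, (finsupp (NN Z) `<=` finsupp Z)%fset.
  move=> Z; apply/fsubsetP => x; rewrite !mem_finsupp NNE.
  by apply: contra => /eqP ->; rewrite N0.
have sX := fsubset_refl (finsupp X); have sY := fsubset_refl (finsupp Y).
apply/fsfunP => g.
rewrite NNE /tens_sub !tens_addE tens_oppE NNE.
rewrite (tens_mulE _ _ _ _ _ _ _ _ (sN X) (sN Y)) (tens_mulE _ _ _ _ _ _ _ _ (sN X) sY).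
rewrite (tens_mulE _ _ _ _ _ _ _ _ sX (sN Y)) (tens_mulE _ _ _ _ _ _ _ _ sX sY).
transitivity (\sum_(a <- finsupp X) \sum_(b <- finsupp Y | mul a b == g)
   (N g : A -> A) (NN X a * Y b + X a * NN Y b - N g (X a * Y b))).
  apply: eq_bigr => a _; apply: eq_bigr => b /eqP <-.
  by rewrite !NNE HN.
rewrite !raddfB !raddfD /= !linear_sum /=.
rewrite -!big_split /=.
apply: eq_bigr => a _.
rewrite !linear_sum /= -!big_split /=.
apply: eq_bigr => b _.
by rewrite !raddfB !raddfD.
Qed.
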